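(* Every digraph $D$ with minimum out-degree $\delta^+(D) \ge 2$ contains a subdivision of $\overleftrightarrow{K}_3 - e$.
   Context: Digraphs are finite, loopless, have no parallel arcs, but may contain digons (pairs of anti-parallel arcs). $\overleftrightarrow{K}_3$ is the bioriented triangle: the digraph on three vertices containing both arcs $(u,v)$ and $(v,u)$ for every pair of distinct vertices; $\overleftrightarrow{K}_3 - e$ is the digraph obtained from it by deleting a single arc. A subdivision of a digraph $F$ is a digraph obtained by replacing each arc $(x,y)$ of $F$ by a directed path from $x$ to $y$, such that the paths corresponding to different arcs are internally vertex-disjoint. $\delta^+(D)$ denotes the minimum out-degree of $D$. *)

(* Defs.v *)
From mathcomp Require Import all_boot.
Set Implicit Arguments. Unset Strict Implicit. Unset Printing Implicit Defensive.

(* Looplessness is imposed as a hypothesis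
   (irreflexive e); no parallel arcs is automatic; digons are allowed. *)

Definition outdeg (V : finType) (e : rel V) (v : V) : nat := #|[set w | e v w]|.

Definition dipath (V : finType) (e : rel V) (x y : V) (s : seq V) : bool :=
  path e x (rcons s y) && uniq (x :: rcons s y).

(* Branch vertices a, b, c; arcs of K3<->-e: ab, ba, bc, cb, ac (the arc ca
   is deleted; all choices of deleted arc give isomorphic digraphs). *)
Definition has_subdiv_K3_minus_e (V : finType) (e : rel V) : Prop :=
  exists (a b c : V) (sab sba sbc scb sac : seq V),
    [/\ uniq [:: a; b; c],
        [/\ dipath e a b sab, dipath e b a sba, dipath e b c sbc,
            dipath e c b scb & dipath e a c sac],
        uniq (sab ++ sba ++ sbc ++ scb ++ sac) &
        [disjoint [:: a; b; c] & sab ++ sba ++ sbc ++ scb ++ sac]].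

(* Main.v *)
Require Import Defs.
From mathcomp Require Import all_boot zify.
Set Implicit Arguments. Unset Strict Implicit. Unset Printing Implicit Defensive.


Definition outd (V : finType) (e : rel V) (T : {set V}) (v : V) := #|[set w in T | e v w]|.
Definition ind (V : finType) (e : rel V) (T : {set V}) (w : V) := #|[set v in T | e v w]|.

Definition inst (V : finType) (e : rel V) (T : {set V}) (r : V) : Prop :=
  [/\ irreflexive e, r \in T, 0 < outd e T r &
      forall v, v \in T -> v != r -> 1 < outd e T v].

Definition sub_in (V : finType) (e : rel V) (T : {set V}) : Prop :=
  exists (a b c : V) (sab sba sbc scb sac : seq V),
    [/\ uniq [:: a; b; c],
        [/\ dipath e a b sab, dipath e b a sba, dipath e b c sbc,
            dipath e c b scb & dipath e a c sac],
        uniq (sab ++ sba ++ sbc ++ scb ++ sac),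
        [disjoint [:: a; b; c] & sab ++ sba ++ sbc ++ scb ++ sac] &
        {subset a :: b :: c :: (sab ++ sba ++ sbc ++ scb ++ sac) <= T}].

Lemma dipath_mono (V : finType) (e e' : rel V) x y s :
  (forall a b, e a b -> e' a b) -> dipath e x y s -> dipath e' x y s.
Proof.
move=> H /andP [Hp Hu]; apply/andP; split=> //; exact: sub_path Hp.
Qed.

Lemma sub_in_mono (V : finType) (e e' : rel V) (T T' : {set V}) :
  (forall a b, e a b -> e' a b) -> T \subset T' -> sub_in e T -> sub_in e' T'.
Proof.
move=> He HT [a [b [c [sab [sba [sbc [scb [sac [H1 [H2 H3 H4 H5 H6] H7 H8 H9]]]]]]]]].
exists a, b, c, sab, sba, sbc, scb, sac; split=> //.
  by split; apply: dipath_mono He _.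
by move=> w /H9 wT; apply: (subsetP HT).
Qed.

Lemma sub_in_has (V : finType) (e : rel V) T : sub_in e T -> has_subdiv_K3_minus_e e.
Proof.
move=> [a [b [c [sab [sba [sbc [scb [sac [H1 H2 H3 H4 H9]]]]]]]]].
by exists a, b, c, sab, sba, sbc, scb, sac; split.
Qed.

Lemma outd_mono (V : finType) (e e' : rel V) (T T' : {set V}) v :
  (forall b, e v b -> e' v b) -> T \subset T' -> outd e T v <= outd e' T' v.
Proof.
move=> He HT; apply: subset_leq_card; apply/subsetP => w; rewrite !inE => /andP [wT ew].
by rewrite (subsetP HT _ wT) He.
Qed.

Lemma outd_del (V : finType) (e : rel V) (T : {set V}) v d :
  ~~ e v d -> outd e (T :\ d) v = outd e T v.
Proof.
move=> Hd; rewrite /outd; apply: eq_card => w; rewrite !inE.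
case: (boolP (w == d)) => [/eqP -> |] //=; by rewrite (negbTE Hd) andbF.
Qed.

Lemma outd_del_le (V : finType) (e : rel V) (T : {set V}) v d :
  outd e T v <= (outd e (T :\ d) v).+1.
Proof.
rewrite /outd.
apply: leq_trans (_ : #|d |: [set w in T :\ d | e v w]| <= _).
  apply: subset_leq_card; apply/subsetP => w; rewrite !inE.
  by case: (w == d).
by rewrite cardsU1; case: (d \notin _).
Qed.


Fixpoint cons2 (V : eqType) (u y0 : V) (x : V) (l : seq V) : bool :=
  if l is y :: l' then ((x == u) && (y == y0)) || cons2 u y0 y l' else false.

Fixpoint liftp (V : eqType) (u z y0 : V) (x : V) (l : seq V) : seq V :=
  if l is y :: l' then
    (if (x == u) && (y == y0) then z :: y :: liftp u z y0 y l' else y :: liftp u z y0 y l')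
  else [::].

Definition virt (V : eqType) (e : rel V) (u y0 : V) : rel V :=
  fun a b => e a b || (a == u) && (b == y0).

Lemma path_liftp (V : eqType) (e : rel V) u z y0 x l :
  e u z -> e z y0 -> path (virt e u y0) x l -> path e x (liftp u z y0 x l).
Proof.
move=> Huz Hzy; elim: l x => [|y l IH] x //=.
move=> /andP [Hxy Hp]; case: ifP => [/andP [/eqP ex /eqP ey]|Hn] /=.
  by subst; rewrite Huz Hzy /= IH.
rewrite IH // andbT; move: Hxy; rewrite /virt Hn orbF //.
Qed.

Lemma last_liftp (V : eqType) u z y0 (x : V) l : last x (liftp u z y0 x l) = last x l.
Proof. by elim: l x => [|y l IH] x //=; case: ifP => _ /=; apply: IH. Qed.

Lemma mem_liftp (V : eqType) u z y0 (x : V) l w :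
  (w \in liftp u z y0 x l) = (w \in l) || (w == z) && cons2 u y0 x l.
Proof.
elim: l x => [|y l IH] x /=; first by rewrite andbF.
case: ifP => H /=; rewrite !inE IH /=.
  by case: (w == z); case: (w == y); case: (w \in l).
by case: (w == z); case: (w == y); case: (w \in l).
Qed.

Lemma cons2_mem (V : eqType) (u y0 x : V) l :
  cons2 u y0 x l -> (u \in belast x l) && (y0 \in l).
Proof.
elim: l x => [|y l IH] x //=.
case/orP => [/andP [/eqP -> /eqP ->]|/IH /andP [H1 H2]].
  by rewrite !inE !eqxx.
by rewrite !inE H1 H2 !orbT.
Qed.

Lemma uniq_liftp (V : eqType) u z y0 (x : V) l :
  z \notin x :: l -> uniq (x :: l) -> uniq (x :: liftp u z y0 x l).
Proof.
elim: l x => [|y l IH] x //=.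
rewrite !inE negb_or => /andP [zx /norP [zy zl]] /andP [xyl uyl].
have U : uniq (y :: liftp u z y0 y l).
  by apply: IH => //; rewrite inE negb_or zy zl.
move: U => /= /andP [U1 U2].
move: xyl; rewrite negb_or => /andP [xy xl].
have xL : x \notin liftp u z y0 y l by rewrite mem_liftp (negbTE xl) (eq_sym x z) (negbTE zx).
case: ifP => H /=.
  move: H => /andP [/eqP ex /eqP ey].
  have nc : ~~ cons2 u y0 y l.
    apply/negP => /cons2_mem /andP [Hu _].
    have := mem_belast Hu; rewrite -ex inE (negbTE xy) /= => xl'.
    by rewrite xl' in xl.
  have zL : z \notin liftp u z y0 y l by rewrite mem_liftp (negbTE zl) (negbTE nc) andbF.
  by rewrite !inE !negb_or (eq_sym x z) zx xy xL zy zL U1 U2.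
by rewrite !inE negb_or xy xL U1 U2.
Qed.

Lemma nonempty_rcons (T : Type) (x y : T) (L : seq T) :
  L <> [::] -> last x L = y -> exists s', L = rcons s' y.
Proof.
case: L => [//|h t] _ /= <-; exists (belast h t); exact: lastI.
Qed.

Lemma dipath_lift (V : finType) (e : rel V) u z y0 x y s :
  e u z -> e z y0 -> z \notin x :: rcons s y -> dipath (virt e u y0) x y s ->
  exists2 s', dipath e x y s' &
    forall w, (w \in s') = (w \in s) || (w == z) && cons2 u y0 x (rcons s y).
Proof.
move=> Huz Hzy zn /andP [Hp Hu].
have HL := path_liftp Huz Hzy Hp.
have UL := uniq_liftp u y0 zn Hu.
have lastL : last x (liftp u z y0 x (rcons s y)) = y by rewrite last_liftp last_rcons.
have neL : liftp u z y0 x (rcons s y) <> [::].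
  by case: s {Hp Hu zn HL UL lastL} => [|h t] /=; case: ifP.
have [s' Es'] := nonempty_rcons neL lastL.
exists s'.
  by apply/andP; rewrite -Es'.
move=> w; have := mem_liftp u z y0 x (rcons s y) w; rewrite Es' !mem_rcons !inE.
case: (boolP (w == y)) => [/eqP -> _|_ //].
move: UL; rewrite Es' /= rcons_uniq => /andP [_ /andP [/negbTE -> _]].
move: Hu; rewrite /= rcons_uniq => /andP [_ /andP [/negbTE -> _]].
move: zn; rewrite inE mem_rcons inE negb_or => /andP [_ /norP [zy _]].
by rewrite eq_sym (negbTE zy).
Qed.

Lemma cons2_excl (V : eqType) (u y0 : V) x1 y1 s1 x2 y2 s2 :
  cons2 u y0 x1 (rcons s1 y1) -> cons2 u y0 x2 (rcons s2 y2) ->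
  (forall w, w \in s1 -> w \in s2 -> False) ->
  x1 \notin s2 -> x2 \notin s1 -> y1 \notin s2 -> y2 \notin s1 ->
  x1 = x2 /\ y1 = y2.
Proof.
move=> /cons2_mem /andP [U1 Y1] /cons2_mem /andP [U2 Y2] D x1s2 x2s1 y1s2 y2s1.
rewrite belast_rcons inE in U1; rewrite belast_rcons inE in U2.
rewrite mem_rcons inE in Y1; rewrite mem_rcons inE in Y2.
split.
- case/orP: U1 => [/eqP E1|H1]; case/orP: U2 => [/eqP E2|H2].
  + by rewrite -E1 -E2.
  + by rewrite -E1 H2 in x1s2.
  + by rewrite -E2 H1 in x2s1.
  + by exfalso; exact: D u H1 H2.
- case/orP: Y1 => [/eqP E1|H1]; case/orP: Y2 => [/eqP E2|H2].
  + by rewrite -E1 -E2.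
  + by rewrite -E1 H2 in y1s2.
  + by rewrite -E2 H1 in y2s1.
  + by exfalso; exact: D y0 H1 H2.
Qed.

Lemma uniq5_lift (V : eqType) (z : V) (s1 s2 s3 s4 s5 t1 t2 t3 t4 t5 : seq V)
    (c1 c2 c3 c4 c5 : bool) :
  uniq (s1 ++ s2 ++ s3 ++ s4 ++ s5) -> z \notin (s1 ++ s2 ++ s3 ++ s4 ++ s5) ->
  uniq t1 -> uniq t2 -> uniq t3 -> uniq t4 -> uniq t5 ->
  (forall w, (w \in t1) = (w \in s1) || (w == z) && c1) ->
  (forall w, (w \in t2) = (w \in s2) || (w == z) && c2) ->
  (forall w, (w \in t3) = (w \in s3) || (w == z) && c3) ->
  (forall w, (w \in t4) = (w \in s4) || (w == z) && c4) ->
  (forall w, (w \in t5) = (w \in s5) || (w == z) && c5) ->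
  (c1 + c2 + c3 + c4 + c5 <= 1)%N ->
  uniq (t1 ++ t2 ++ t3 ++ t4 ++ t5).
Proof.
move=> Hu zn T1 T2 T3 T4 T5 M1 M2 M3 M4 M5 Hc.
apply: count_mem_uniq => w.
have Hu' := Hu.
move: Hu'; rewrite !cat_uniq => /and3P [S1 _ /and3P [S2 _ /and3P [S3 _ /and3P [S4 _ S5]]]].
rewrite !count_cat !count_uniq_mem // !mem_cat M1 M2 M3 M4 M5.
case: (boolP (w == z)) => [/eqP ->|_].
  move: zn; rewrite !mem_cat !negb_or => /and5P [/negbTE -> /negbTE -> /negbTE -> /negbTE -> /negbTE ->].
  by clear M1 M2 M3 M4 M5; move: Hc; case: c1; case: c2; case: c3; case: c4; case: c5.
rewrite !andFb !orbF.
by have := count_uniq_mem w Hu; rewrite !count_cat !count_uniq_mem // !mem_cat.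
Qed.


Lemma mem_count_pos (V : eqType) (s : seq V) w : w \in s -> (0 < count_mem w s)%N.
Proof. by rewrite -has_count has_pred1. Qed.

Lemma uniq_count1 (V : eqType) (L : seq V) w : uniq L -> (count_mem w L <= 1)%N.
Proof. by move=> U; rewrite count_uniq_mem // leq_b1. Qed.

Lemma two_cnt (V : eqType) (L s t : seq V) w :
  uniq L -> w \in s -> w \in t -> (count_mem w s + count_mem w t <= count_mem w L)%N -> False.
Proof.
move=> U H1 H2 H; have := uniq_count1 w U; have := mem_count_pos H1; have := mem_count_pos H2.
move: H; move: (count_mem w s) (count_mem w t) (count_mem w L) => a b c; lia.
Qed.

Lemma pair_excl (V : eqType) (u y0 : V) (x1 y1 x2 y2 : V) s1 s2 (B : seq V) :
  cons2 u y0 x1 (rcons s1 y1) -> cons2 u y0 x2 (rcons s2 y2) ->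
  (forall w, w \in B -> w \notin s1) -> (forall w, w \in B -> w \notin s2) ->
  (forall w, w \in s1 -> w \in s2 -> False) ->
  x1 \in B -> y1 \in B -> x2 \in B -> y2 \in B ->
  x1 = x2 /\ y1 = y2.
Proof.
move=> C1 C2 B1 B2 D x1B y1B x2B y2B.
apply: (cons2_excl C1 C2 D); [exact: B2 | exact: B1 | exact: B2 | exact: B1].
Qed.

Lemma sub_in_lift (V : finType) (e : rel V) (T : {set V}) u z y0 :
  e u z -> e z y0 -> z \in T -> sub_in (virt e u y0) (T :\ z) -> sub_in e T.
Proof.
move=> Huz Hzy zT [a [b [c [sab [sba [sbc [scb [sac [Habc [Pab Pba Pbc Pcb Pac] Hu Hd Hs]]]]]]]]].
have zn : forall w, w \in a :: b :: c :: (sab ++ sba ++ sbc ++ scb ++ sac) -> w != z.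
  by move=> w /Hs; rewrite !inE => /andP [].
have zfull : forall x y s, x \in [:: a; b; c] -> y \in [:: a; b; c] ->
   {subset s <= sab ++ sba ++ sbc ++ scb ++ sac} -> z \notin x :: rcons s y.
  move=> x y s xB yB sS; rewrite inE mem_rcons inE !negb_or.
  apply/and3P; split.
  - by rewrite eq_sym; apply: zn; move: xB; rewrite !inE => /or3P [] ->; rewrite ?orbT.
  - by rewrite eq_sym; apply: zn; move: yB; rewrite !inE => /or3P [] ->; rewrite ?orbT.
  - by apply/negP => /sS zs; have := zn z; rewrite !inE zs !orbT eqxx => /(_ isT).
have Br : forall w, w \in [:: a; b; c] -> w \notin sab ++ sba ++ sbc ++ scb ++ sac.
  by move=> w wB; move: Hd; rewrite disjoint_has => /hasPn; apply.

have [t1 D1 M1] := dipath_lift Huz Hzy (zfull a b sab ltac:(by rewrite !inE eqxx ?orbT) ltac:(by rewrite !inE eqxx ?orbT) ltac:(by move=> w; rewrite !mem_cat => ->; rewrite ?orbT)) Pab.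
have B1 : forall w, w \in [:: a; b; c] -> w \notin sab by move=> w /Br; rewrite !mem_cat !negb_or => /and5P [].
have [t2 D2 M2] := dipath_lift Huz Hzy (zfull b a sba ltac:(by rewrite !inE eqxx ?orbT) ltac:(by rewrite !inE eqxx ?orbT) ltac:(by move=> w; rewrite !mem_cat => ->; rewrite ?orbT)) Pba.
have B2 : forall w, w \in [:: a; b; c] -> w \notin sba by move=> w /Br; rewrite !mem_cat !negb_or => /and5P [].
have [t3 D3 M3] := dipath_lift Huz Hzy (zfull b c sbc ltac:(by rewrite !inE eqxx ?orbT) ltac:(by rewrite !inE eqxx ?orbT) ltac:(by move=> w; rewrite !mem_cat => ->; rewrite ?orbT)) Pbc.
have B3 : forall w, w \in [:: a; b; c] -> w \notin sbc by move=> w /Br; rewrite !mem_cat !negb_or => /and5P [].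
have [t4 D4 M4] := dipath_lift Huz Hzy (zfull c b scb ltac:(by rewrite !inE eqxx ?orbT) ltac:(by rewrite !inE eqxx ?orbT) ltac:(by move=> w; rewrite !mem_cat => ->; rewrite ?orbT)) Pcb.
have B4 : forall w, w \in [:: a; b; c] -> w \notin scb by move=> w /Br; rewrite !mem_cat !negb_or => /and5P [].
have [t5 D5 M5] := dipath_lift Huz Hzy (zfull a c sac ltac:(by rewrite !inE eqxx ?orbT) ltac:(by rewrite !inE eqxx ?orbT) ltac:(by move=> w; rewrite !mem_cat => ->; rewrite ?orbT)) Pac.
have B5 : forall w, w \in [:: a; b; c] -> w \notin sac by move=> w /Br; rewrite !mem_cat !negb_or => /and5P [].
have D12 : forall w, w \in sab -> w \in sba -> False.
  move=> w H1 H2; apply: (two_cnt Hu H1 H2); rewrite !count_cat; clear; lia.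
have D13 : forall w, w \in sab -> w \in sbc -> False.
  move=> w H1 H2; apply: (two_cnt Hu H1 H2); rewrite !count_cat; clear; lia.
have D14 : forall w, w \in sab -> w \in scb -> False.
  move=> w H1 H2; apply: (two_cnt Hu H1 H2); rewrite !count_cat; clear; lia.
have D15 : forall w, w \in sab -> w \in sac -> False.
  move=> w H1 H2; apply: (two_cnt Hu H1 H2); rewrite !count_cat; clear; lia.
have D23 : forall w, w \in sba -> w \in sbc -> False.
  move=> w H1 H2; apply: (two_cnt Hu H1 H2); rewrite !count_cat; clear; lia.
have D24 : forall w, w \in sba -> w \in scb -> False.
  move=> w H1 H2; apply: (two_cnt Hu H1 H2); rewrite !count_cat; clear; lia.
have D25 : forall w, w \in sba -> w \in sac -> False.
  move=> w H1 H2; apply: (two_cnt Hu H1 H2); rewrite !count_cat; clear; lia.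
have D34 : forall w, w \in sbc -> w \in scb -> False.
  move=> w H1 H2; apply: (two_cnt Hu H1 H2); rewrite !count_cat; clear; lia.
have D35 : forall w, w \in sbc -> w \in sac -> False.
  move=> w H1 H2; apply: (two_cnt Hu H1 H2); rewrite !count_cat; clear; lia.
have D45 : forall w, w \in scb -> w \in sac -> False.
  move=> w H1 H2; apply: (two_cnt Hu H1 H2); rewrite !count_cat; clear; lia.
have N12 : ~~ (cons2 u y0 a (rcons sab b) && cons2 u y0 b (rcons sba a)).
  apply/negP => /andP [h1 h2]; have [E1 E2] := pair_excl h1 h2 B1 B2 D12 ltac:(by rewrite !inE eqxx ?orbT) ltac:(by rewrite !inE eqxx ?orbT) ltac:(by rewrite !inE eqxx ?orbT) ltac:(by rewrite !inE eqxx ?orbT).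
  by move: Habc; rewrite /= !inE ?E1 ?E2 !eqxx ?orbT ?andbF.
have N13 : ~~ (cons2 u y0 a (rcons sab b) && cons2 u y0 b (rcons sbc c)).
  apply/negP => /andP [h1 h2]; have [E1 E2] := pair_excl h1 h2 B1 B3 D13 ltac:(by rewrite !inE eqxx ?orbT) ltac:(by rewrite !inE eqxx ?orbT) ltac:(by rewrite !inE eqxx ?orbT) ltac:(by rewrite !inE eqxx ?orbT).
  by move: Habc; rewrite /= !inE ?E1 ?E2 !eqxx ?orbT ?andbF.
have N14 : ~~ (cons2 u y0 a (rcons sab b) && cons2 u y0 c (rcons scb b)).
  apply/negP => /andP [h1 h2]; have [E1 E2] := pair_excl h1 h2 B1 B4 D14 ltac:(by rewrite !inE eqxx ?orbT) ltac:(by rewrite !inE eqxx ?orbT) ltac:(by rewrite !inE eqxx ?orbT) ltac:(by rewrite !inE eqxx ?orbT).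
  by move: Habc; rewrite /= !inE ?E1 ?E2 !eqxx ?orbT ?andbF.
have N15 : ~~ (cons2 u y0 a (rcons sab b) && cons2 u y0 a (rcons sac c)).
  apply/negP => /andP [h1 h2]; have [E1 E2] := pair_excl h1 h2 B1 B5 D15 ltac:(by rewrite !inE eqxx ?orbT) ltac:(by rewrite !inE eqxx ?orbT) ltac:(by rewrite !inE eqxx ?orbT) ltac:(by rewrite !inE eqxx ?orbT).
  by move: Habc; rewrite /= !inE ?E1 ?E2 !eqxx ?orbT ?andbF.
have N23 : ~~ (cons2 u y0 b (rcons sba a) && cons2 u y0 b (rcons sbc c)).
  apply/negP => /andP [h1 h2]; have [E1 E2] := pair_excl h1 h2 B2 B3 D23 ltac:(by rewrite !inE eqxx ?orbT) ltac:(by rewrite !inE eqxx ?orbT) ltac:(by rewrite !inE eqxx ?orbT) ltac:(by rewrite !inE eqxx ?orbT).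
  by move: Habc; rewrite /= !inE ?E1 ?E2 !eqxx ?orbT ?andbF.
have N24 : ~~ (cons2 u y0 b (rcons sba a) && cons2 u y0 c (rcons scb b)).
  apply/negP => /andP [h1 h2]; have [E1 E2] := pair_excl h1 h2 B2 B4 D24 ltac:(by rewrite !inE eqxx ?orbT) ltac:(by rewrite !inE eqxx ?orbT) ltac:(by rewrite !inE eqxx ?orbT) ltac:(by rewrite !inE eqxx ?orbT).
  by move: Habc; rewrite /= !inE ?E1 ?E2 !eqxx ?orbT ?andbF.
have N25 : ~~ (cons2 u y0 b (rcons sba a) && cons2 u y0 a (rcons sac c)).
  apply/negP => /andP [h1 h2]; have [E1 E2] := pair_excl h1 h2 B2 B5 D25 ltac:(by rewrite !inE eqxx ?orbT) ltac:(by rewrite !inE eqxx ?orbT) ltac:(by rewrite !inE eqxx ?orbT) ltac:(by rewrite !inE eqxx ?orbT).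
  by move: Habc; rewrite /= !inE ?E1 ?E2 !eqxx ?orbT ?andbF.
have N34 : ~~ (cons2 u y0 b (rcons sbc c) && cons2 u y0 c (rcons scb b)).
  apply/negP => /andP [h1 h2]; have [E1 E2] := pair_excl h1 h2 B3 B4 D34 ltac:(by rewrite !inE eqxx ?orbT) ltac:(by rewrite !inE eqxx ?orbT) ltac:(by rewrite !inE eqxx ?orbT) ltac:(by rewrite !inE eqxx ?orbT).
  by move: Habc; rewrite /= !inE ?E1 ?E2 !eqxx ?orbT ?andbF.
have N35 : ~~ (cons2 u y0 b (rcons sbc c) && cons2 u y0 a (rcons sac c)).
  apply/negP => /andP [h1 h2]; have [E1 E2] := pair_excl h1 h2 B3 B5 D35 ltac:(by rewrite !inE eqxx ?orbT) ltac:(by rewrite !inE eqxx ?orbT) ltac:(by rewrite !inE eqxx ?orbT) ltac:(by rewrite !inE eqxx ?orbT).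
  by move: Habc; rewrite /= !inE ?E1 ?E2 !eqxx ?orbT ?andbF.
have N45 : ~~ (cons2 u y0 c (rcons scb b) && cons2 u y0 a (rcons sac c)).
  apply/negP => /andP [h1 h2]; have [E1 E2] := pair_excl h1 h2 B4 B5 D45 ltac:(by rewrite !inE eqxx ?orbT) ltac:(by rewrite !inE eqxx ?orbT) ltac:(by rewrite !inE eqxx ?orbT) ltac:(by rewrite !inE eqxx ?orbT).
  by move: Habc; rewrite /= !inE ?E1 ?E2 !eqxx ?orbT ?andbF.
exists a, b, c, t1, t2, t3, t4, t5; split => //.
- apply: (uniq5_lift Hu _ _ _ _ _ _ M1 M2 M3 M4 M5).
  + by apply/negP => H; move: (zn z); rewrite !inE H !orbT eqxx => /(_ isT).
  + by move: D1 => /andP [_]; rewrite /= rcons_uniq => /andP [_ /andP [_ ->]].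
  + by move: D2 => /andP [_]; rewrite /= rcons_uniq => /andP [_ /andP [_ ->]].
  + by move: D3 => /andP [_]; rewrite /= rcons_uniq => /andP [_ /andP [_ ->]].
  + by move: D4 => /andP [_]; rewrite /= rcons_uniq => /andP [_ /andP [_ ->]].
  + by move: D5 => /andP [_]; rewrite /= rcons_uniq => /andP [_ /andP [_ ->]].
  + move: N12 N13 N14 N15 N23 N24 N25 N34 N35 N45.
    by case: (cons2 _ _ _ (rcons sab b)); case: (cons2 _ _ _ (rcons sba a)); case: (cons2 _ _ _ (rcons sbc c)); case: (cons2 _ _ _ (rcons scb b)); case: (cons2 _ _ _ (rcons sac c)).
- rewrite disjoint_has; apply/hasPn => w wB.
  have wz : w != z by apply: zn; move: wB; rewrite !inE => /or3P [] ->; rewrite ?orbT.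
  rewrite !mem_cat M1 M2 M3 M4 M5 (negbTE wz) !andFb !orbF -!mem_cat.
  exact: Br.
- move=> w; rewrite !inE !mem_cat M1 M2 M3 M4 M5.
  case: (boolP (w == z)) => [/eqP -> _ //|wz]; rewrite !andFb !orbF => H.
  have : w \in T :\ z by apply: Hs; rewrite !inE !mem_cat.
  by rewrite !inE => /andP [].
Qed.


Lemma outd_sum (V : finType) (e : rel V) (T : {set V}) v :
  outd e T v = \sum_(w in T) (e v w : nat).
Proof.
rewrite /outd -sum1_card big_mkcond [RHS]big_mkcond; apply: eq_bigr => w _.
by rewrite !inE; case: (w \in T); case: (e v w).
Qed.

Lemma ind_sum (V : finType) (e : rel V) (T : {set V}) w :
  ind e T w = \sum_(v in T) (e v w : nat).
Proof.
rewrite /ind -sum1_card big_mkcond [RHS]big_mkcond; apply: eq_bigr => v _.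
by rewrite !inE; case: (v \in T); case: (e v w).
Qed.

Lemma exists_low_in (V : finType) (e : rel V) (T : {set V}) r :
  r \in T -> outd e T r = 1 -> (forall v, v \in T -> v != r -> outd e T v = 2) ->
  exists2 w, w \in T & ind e T w <= 1.
Proof.
move=> rT Hr Hv.
case: (boolP [exists w in T, ind e T w <= 1]) => [/exists_inP [w wT Hw]|].
  by exists w.
move=> /exists_inPn H; exfalso.
have Hsum : \sum_(v in T) outd e T v = \sum_(w in T) ind e T w.
  rewrite (eq_bigr _ (fun v _ => outd_sum e T v)) (eq_bigr _ (fun w _ => ind_sum e T w)).
  exact: exchange_big.
have H1 : \sum_(w in T) 2 <= \sum_(w in T) ind e T w.
  by apply: leq_sum => w wT; rewrite ltnNge H.
have H2 : \sum_(v in T) outd e T v = 1 + \sum_(v in T | v != r) 2.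
  rewrite (bigD1 r) //= Hr; congr (_ + _); apply: eq_bigr => v /andP [vT vr]; exact: Hv.
have H3 : \sum_(w in T) 2 = 2 + \sum_(w in T | w != r) 2 by rewrite (bigD1 r).
move: H1; rewrite -Hsum H2 H3; move: (\sum_(w in T | w != r) 2) => X; lia.
Qed.


Lemma set_in0 (V : finType) (A : {set V}) (P : pred V) :
  [set v in A | P v] = set0 -> forall v, v \in A -> ~~ P v.
Proof.
move=> E v vA; apply/negP => Pv.
have : v \in [set v in A | P v] by rewrite inE vA.
by rewrite E inE.
Qed.

Lemma set_in1 (V : finType) (A : {set V}) (P : pred V) u :
  [set v in A | P v] = [set u] -> [/\ u \in A, P u & forall v, v \in A -> P v -> v = u].
Proof.
move=> E; have : u \in [set v in A | P v] by rewrite E set11.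
rewrite inE => /andP [uA Pu]; split=> // v vA Pv.
have : v \in [set v in A | P v] by rewrite inE vA.
by rewrite E inE => /eqP.
Qed.

Lemma set_in2 (V : finType) (A : {set V}) (P : pred V) p q :
  [set v in A | P v] = [set p; q] ->
  [/\ p \in A, P p, q \in A, P q & forall v, v \in A -> P v -> v = p \/ v = q].
Proof.
move=> E; have : p \in [set v in A | P v] by rewrite E !inE eqxx.
have : q \in [set v in A | P v] by rewrite E !inE eqxx orbT.
rewrite !inE => /andP [qA Pq] /andP [pA Pp]; split=> // v vA Pv.
have : v \in [set v in A | P v] by rewrite inE vA.
by rewrite E !inE => /orP [/eqP ->|/eqP ->]; [left|right].
Qed.

Lemma outd_ge1 (V : finType) (e : rel V) (T : {set V}) v y :
  y \in T -> e v y -> 0 < outd e T v.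
Proof.
by move=> yT evy; rewrite /outd card_gt0; apply/set0Pn; exists y; rewrite inE yT.
Qed.

Lemma outd_ge2 (V : finType) (e : rel V) (T : {set V}) v x y :
  x \in T -> e v x -> y \in T -> e v y -> x != y -> 1 < outd e T v.
Proof.
move=> xT evx yT evy xy; rewrite /outd.
apply: leq_trans (_ : #|[set x; y]| <= _); first by rewrite cards2 xy.
by apply: subset_leq_card; apply/subsetP => t; rewrite !inE => /orP [] /eqP ->; rewrite ?xT ?yT.
Qed.

Definition eT (V : finType) (e : rel V) (T : {set V}) : rel V := fun a b => (b \in T) && e a b.

Lemma path_eT_sub (V : finType) (e : rel V) (T : {set V}) x l :
  path (eT e T) x l -> {subset l <= T}.
Proof.
elim: l x => [|y l IH] x //= /andP [/andP [yT _] Hp] t.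
rewrite inE => /orP [/eqP ->//|tl]; exact: (IH y Hp t tl).
Qed.

Lemma connect_eT_in (V : finType) (e : rel V) (T : {set V}) x t :
  x \in T -> connect (eT e T) x t -> t \in T.
Proof.
move=> xT /connectP [p Hp ->].
have := mem_last x p; rewrite inE => /orP [/eqP ->//|tl]; exact: (path_eT_sub Hp tl).
Qed.

Lemma exception_k3 (V : finType) (e : rel V) (T : {set V}) u w x :
  irreflexive e -> w \in T -> u \in T -> x \in T ->
  e u w -> e u x -> e w u -> e w x -> w != x ->
  (forall v, v \in T -> e v w -> v = u) ->
  connect (eT e T) x u -> sub_in e T.
Proof.
move=> Hirr wT uT xT euw eux ewu ewx wx Hin /connectP [p Hp].
case: (shortenP Hp) => p' Hp' Hu' _ Hl.
have ux : u != x by apply/eqP => E; move: (Hirr u); rewrite {2}E eux.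
have uw : u != w by apply/eqP => E; move: (Hirr u); rewrite {2}E euw.
have ne : p' <> [::] by move=> E; move: Hl; rewrite E /= => E'; move: ux; rewrite E' eqxx.
have [s Es] := nonempty_rcons ne (esym Hl).
rewrite Es in Hp' Hu'.
have sT : {subset s <= T}.
  by move=> t ts; apply: (path_eT_sub Hp'); rewrite mem_rcons inE ts orbT.
have Hpe : path e x (rcons s u) by apply: sub_path Hp' => a b /andP [].
move: (Hu'); rewrite /= rcons_uniq => /andP [xs /andP [us Us]].
have xs' : x \notin s by move: xs; rewrite mem_rcons inE negb_or => /andP [].
have ws : w \notin s.
  apply/negP => ws; case/splitPr: ws Hp' Hu' => s1 s2 Hp' Hu'.
  move: Hp'; rewrite rcons_cat cat_path => /andP [Hp1 /= /andP [/andP [_ Hlw] _]].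
  have lT : last x s1 \in T.
    have := mem_last x s1; rewrite inE => /orP [/eqP ->//|ls1].
    exact: (path_eT_sub Hp1 ls1).
  have Eu := Hin _ lT Hlw.
  move: Hu'; rewrite rcons_cat -cat_cons cat_uniq => /and3P [_ /hasPn H _].
  have := H u; rewrite !inE mem_rcons inE eqxx orbT => /(_ isT).
  by have := mem_last x s1; rewrite inE Eu => ->.
exists w, u, x, [::], [::], [::], s, [::]; split.
- by rewrite /= !inE negb_or eq_sym uw wx ux.
- split.
  + by rewrite /dipath /= ewu /= inE eq_sym uw.
  + by rewrite /dipath /= euw /= inE uw.
  + by rewrite /dipath /= eux /= inE ux.
  + by rewrite /dipath Hpe.
  + by rewrite /dipath /= ewx /= inE wx.
- by rewrite /= cats0.
- by rewrite disjoint_has /= cats0 (negbTE ws) (negbTE us) (negbTE xs').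
- move=> t; rewrite !inE /= cats0 => /or4P [/eqP ->|/eqP ->|/eqP ->|ts] //.
  exact: sT.
Qed.

Lemma closure_case (V : finType) (e : rel V) (T : {set V}) (r x u : V) :
  (forall (e' : rel V) (T' : {set V}) (r' : V), T' \proper T -> inst e' T' r' -> sub_in e' T') ->
  inst e T r -> x \in T -> u \in T -> ~~ connect (eT e T) x u -> sub_in e T.
Proof.
move=> IH [Hirr rT Hr0 Hv1] xT uT Hc.
pose R := [set t | connect (eT e T) x t].
have RT : R \subset T by apply/subsetP => t; rewrite inE; exact: connect_eT_in.
have xR : x \in R by rewrite inE connect0.
have Rcl : forall t y, t \in R -> y \in T -> e t y -> y \in R.
  move=> t y; rewrite !inE => Ht yT ety; apply: connect_trans Ht (connect1 _).
  by rewrite /eT yT ety.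
have Hout : forall t, t \in R -> outd e R t = outd e T t.
  move=> t tR; apply: eq_card => y; rewrite !inE.
  case: (boolP (e t y)) => ety; last by rewrite !andbF.
  rewrite !andbT; apply/idP/idP => [yR|yT]; first exact: (connect_eT_in xT yR).
  by have := Rcl t y tR yT ety; rewrite inE.
have prop : R \proper T.
  by apply/properP; split=> //; exists u => //; rewrite inE.
pose r' := if r \in R then r else x.
apply: (sub_in_mono (e:=e) (fun a b h => h) RT).
apply: (IH e R r' prop); split=> //.
- by rewrite /r'; case: ifP.
- rewrite /r'; case: ifP => rR; rewrite Hout //.
  have xr : x != r by apply/eqP => E; rewrite -E xR in rR.
  by apply: leq_trans (Hv1 x xT xr).
- move=> v vR vr'; rewrite Hout //.
  apply: Hv1; first exact: (subsetP RT).
  move: vr'; rewrite /r'; case: ifP => // rR _.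
  by apply/eqP => E; rewrite -E vR in rR.
Qed.


Lemma virt_irr (V : finType) (e : rel V) u y :
  irreflexive e -> u != y -> irreflexive (virt e u y).
Proof.
move=> Hirr uy a; rewrite /virt Hirr /=; apply/negP => /andP [/eqP E1 /eqP E2].
by move: uy; rewrite -E1 -E2 eqxx.
Qed.

Lemma virt_sub (V : finType) (e : rel V) u y a b : e a b -> virt e u y a b.
Proof. by rewrite /virt => ->. Qed.

Lemma step (V : finType) (e : rel V) (T : {set V}) (r : V) :
  (forall (e' : rel V) (T' : {set V}) (r' : V), T' \proper T -> inst e' T' r' -> sub_in e' T') ->
  inst e T r -> outd e T r = 1 -> (forall v, v \in T -> v != r -> outd e T v = 2) ->
  sub_in e T.
Proof.
move=> IH Hinst Hr Hv; have [Hirr rT Hr0 Hv1] := Hinst.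
have /cards1P [s Es] : #|[set w in T | e r w]| == 1 by apply/eqP.
have [sT ers suniq] := set_in1 Es.
have sr : s != r by apply/eqP => E; move: (Hirr r); rewrite -{2}E ers.
have [w wT Hw] := exists_low_in rT Hr Hv.
have Hmono : forall T' : {set V}, T' \subset T -> sub_in e T' -> sub_in e T.
  by move=> T' HT'; apply: sub_in_mono.
have HD : forall d, d \in T -> T :\ d \subset T by move=> d _; apply: subD1set.
have [Hw0|Hw1] : ind e T w = 0 \/ ind e T w = 1 by lia.
-
  have N := set_in0 (cards0_eq Hw0).
  case: (eqVneq w r) => [Ewr|wr].
  + subst w.
    apply: (Hmono _ (HD r rT)); apply: (IH e (T :\ r) s (properD1 rT)); split=> //.
    * by rewrite !inE sr sT.
    * by rewrite outd_del ?N // Hv.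
    * move=> v; rewrite !inE => /andP [vr vT] _; by rewrite outd_del ?N // Hv.
  + apply: (Hmono _ (HD w wT)); apply: (IH e (T :\ w) r (properD1 wT)); split=> //.
    * by rewrite !inE eq_sym wr rT.
    * by rewrite outd_del ?N // Hr.
    * move=> v; rewrite !inE => /andP [vw vT] vr; by rewrite outd_del ?N // Hv.
- have /cards1P [u Eu] : #|[set v in T | e v w]| == 1 by apply/eqP.
  have [uT euw uuniq] := set_in1 Eu.
  have uw : u != w by apply/eqP => E; move: (Hirr u); rewrite {2}E euw.
  have Nw : forall v, v \in T -> v != u -> ~~ e v w.
    by move=> v vT vu; apply/negP => /(uuniq v vT) /eqP; rewrite (negbTE vu).
  case: (eqVneq w r) => [Ewr|wr].
  + subst w.
    apply: (Hmono _ (HD r rT)); apply: (IH e (T :\ r) u (properD1 rT)); split=> //.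
    * by rewrite !inE uw uT.
    * have := outd_del_le e T u r; rewrite Hv // ltnS; exact.
    * move=> v; rewrite !inE => /andP [vr vT] vu; by rewrite outd_del ?Nw // Hv.
  + have /cards2P [p [q [pq Epq]]] : #|[set x in T | e w x]| == 2 by apply/eqP; exact: Hv.
    have [pT ewp qT ewq wpq] := set_in2 Epq.
    have pw : p != w by apply/eqP => E; move: (Hirr w); rewrite -{2}E ewp.
    have qw : q != w by apply/eqP => E; move: (Hirr w); rewrite -{2}E ewq.
    case: (eqVneq u r) => [Eur|ur].
    *
      subst u.
      have [y [yT ewy yr]] : exists y, [/\ y \in T, e w y & y != r].
        case: (eqVneq p r) => [Epr|pr]; last by exists p.
        by exists q; split=> //; move: pq; rewrite Epr eq_sym.
      have yw : y != w by apply/eqP => E; move: (Hirr w); rewrite -{2}E ewy.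
      apply: (sub_in_lift euw ewy wT).
      apply: (IH (virt e r y) (T :\ w) r (properD1 wT)); split.
      -- by apply: virt_irr => //; rewrite eq_sym.
      -- by rewrite !inE eq_sym wr rT.
      -- by apply: (outd_ge1 (y:=y)); rewrite ?inE ?yw ?yT /virt ?eqxx ?orbT.
      -- move=> v; rewrite !inE => /andP [vw vT] vr.
         apply: leq_trans (outd_mono (e:=e) (T:=T :\ w) _ (subxx _)).
           by rewrite outd_del ?Nw // Hv.
         by move=> b; apply: virt_sub.
    * have /cards2P [p' [q' [pq' Epq']]] : #|[set x in T | e u x]| == 2 by apply/eqP; exact: Hv.
      have [p'T eup' q'T euq' upq'] := set_in2 Epq'.
      have [x [xT eux xw xuniq]] : exists x, [/\ x \in T, e u x, x != w &
                                    forall t, t \in T -> e u t -> t = w \/ t = x].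
        case: (upq' w wT euw) => Ew.
        - exists q'; split=> //; first by rewrite Ew eq_sym.
          by move=> t tT eut; case: (upq' t tT eut) => ->; [left|right].
        - exists p'; split=> //; first by rewrite Ew.
          by move=> t tT eut; case: (upq' t tT eut) => ->; [right|left].
      have ux : u != x by apply/eqP => E; move: (Hirr u); rewrite {2}E eux.
      have virt_case : forall y, y \in T -> e w y -> y != u -> y != x -> sub_in e T.
        move=> y yT ewy yu yx.
        have yw : y != w by apply/eqP => E; move: (Hirr w); rewrite -{2}E ewy.
        apply: (sub_in_lift euw ewy wT).
        apply: (IH (virt e u y) (T :\ w) r (properD1 wT)); split.
        -- by apply: virt_irr => //; rewrite eq_sym.
        -- by rewrite !inE eq_sym wr rT.
        -- apply: leq_trans (outd_mono (e:=e) (T:=T :\ w) _ (subxx _)).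
             by rewrite outd_del ?Nw // 1?eq_sym // Hr.
           by move=> b; apply: virt_sub.
        -- move=> v; rewrite !inE => /andP [vw vT] vr.
           case: (eqVneq v u) => [->|vu].
           ++ apply: (outd_ge2 (x:=x) (y:=y)).
              ** by rewrite !inE xw xT.
              ** by apply: virt_sub.
              ** by rewrite !inE yw yT.
              ** by rewrite /virt !eqxx orbT.
              ** by rewrite eq_sym.
           ++ apply: leq_trans (outd_mono (e:=e) (T:=T :\ w) _ (subxx _)).
                by rewrite outd_del ?Nw // Hv.
              by move=> b; apply: virt_sub.
      case: (boolP ((p != u) && (p != x))) => [/andP [pu px]|Hp].
        exact: (virt_case p).
      case: (boolP ((q != u) && (q != x))) => [/andP [qu qx]|Hq].
        exact: (virt_case q).
      have [ewu ewx] : e w u /\ e w x.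
        move: Hp Hq; rewrite !negb_and !negbK.
        case/orP => /eqP Ep; case/orP => /eqP Eq.
        - by move: pq; rewrite Ep Eq eqxx.
        - by rewrite -Ep -Eq.
        - by rewrite -Ep -Eq.
        - by move: pq; rewrite Ep Eq eqxx.
      have wx' : w != x by rewrite eq_sym.
      case: (boolP (connect (eT e T) x u)) => Hc.
        exact: (exception_k3 Hirr wT uT xT euw eux ewu ewx wx' uuniq Hc).
      exact: (closure_case IH Hinst xT uT Hc).
Qed.


Definition arcs (V : finType) (e : rel V) (T : {set V}) :=
  #|[set p : V * V | (p.1 \in T) && (p.2 \in T) && e p.1 p.2]|.

Definition delarc (V : finType) (e : rel V) (v0 w0 : V) : rel V :=
  fun a b => e a b && ~~ ((a == v0) && (b == w0)).

Lemma arcs_pos (V : finType) (e : rel V) (T : {set V}) r : inst e T r -> 0 < arcs e T.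
Proof.
case=> _ rT Hr _; move: Hr; rewrite /outd card_gt0 => /set0Pn [s]; rewrite inE => /andP [sT ers].
by rewrite /arcs card_gt0; apply/set0Pn; exists (r, s); rewrite inE /= rT sT ers.
Qed.

Lemma arcs_del (V : finType) (e : rel V) (T : {set V}) v0 w0 :
  v0 \in T -> w0 \in T -> e v0 w0 -> arcs (delarc e v0 w0) T < arcs e T.
Proof.
move=> vT wT ew; apply: proper_card; apply/properP; split.
  apply/subsetP => p; rewrite !inE /delarc => /and3P [/andP [h1 h2] h3 _].
  by rewrite h1 h2 h3.
exists (v0, w0); first by rewrite inE /= vT wT ew.
rewrite inE /delarc /=.
by rewrite !eqxx /= !andbF.
Qed.

Lemma outd_delarc_other (V : finType) (e : rel V) (T : {set V}) v0 w0 v :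
  v != v0 -> outd (delarc e v0 w0) T v = outd e T v.
Proof.
move=> vv0; apply: eq_card => w; rewrite !inE /delarc (negbTE vv0) /= andbT //.
Qed.

Lemma outd_delarc_self (V : finType) (e : rel V) (T : {set V}) v0 w0 :
  w0 \in T -> e v0 w0 -> (outd (delarc e v0 w0) T v0).+1 = outd e T v0.
Proof.
move=> wT ew; rewrite /outd (cardsD1 w0 [set w in T | e v0 w]) inE wT ew add1n.
congr (_.+1); apply: eq_card => w; rewrite !inE /delarc eqxx /=.
by case: (w == w0); rewrite ?andbF ?andbT.
Qed.

Lemma main (V : finType) n : forall (e : rel V) (T : {set V}) (r : V),
  #|T| <= n -> inst e T r -> sub_in e T.
Proof.
elim: n => [|n IHn] e T r HT Hi.
  case: Hi => _ rT _ _; move: HT; rewrite leqn0 cards_eq0 => /eqP T0.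
  by rewrite T0 inE in rT.
have IH : forall (e' : rel V) (T' : {set V}) (r' : V), T' \proper T -> inst e' T' r' -> sub_in e' T'.
  move=> e' T' r' Hp; apply: IHn; have := proper_card Hp; lia.
suff H : forall m (e : rel V), arcs e T <= m -> inst e T r -> sub_in e T.
  exact: H _ _ (leqnn _) Hi.
elim=> [|m IHm] e' Ha Hi'.
  by have := arcs_pos Hi'; lia.
have [Hirr rT Hr0 Hv1] := Hi'.
case: (boolP [exists v in T, (if v == r then 1 else 2) < outd e' T v]).
  case/exists_inP => v0 v0T Hgt.
  have /set0Pn [w0] : [set w in T | e' v0 w] != set0.
    by rewrite -card_gt0; apply: leq_trans Hgt; case: (v0 == r).
  rewrite inE => /andP [w0T ew0].
  have Hdel := outd_delarc_self w0T ew0.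
  apply: (sub_in_mono (e:=delarc e' v0 w0) _ (subxx T)).
    by move=> a b /andP [].
  apply: (IHm (delarc e' v0 w0)).
    have := arcs_del v0T w0T ew0; lia.
  split.
  - by move=> a; rewrite /delarc Hirr.
  - exact: rT.
  - case: (eqVneq r v0) => [Er|rv0]; last by rewrite outd_delarc_other.
    by move: Hgt Hdel; rewrite -Er eqxx; lia.
  - move=> v vT vr; case: (eqVneq v v0) => [Ev|vv0]; last by rewrite outd_delarc_other // Hv1.
    by move: Hgt Hdel; rewrite -Ev (negbTE vr); lia.
move=> /exists_inPn Hex.
apply: (step IH Hi').
  by have := Hex r rT; rewrite eqxx; lia.
move=> v vT vr; have := Hex v vT; rewrite (negbTE vr) => H.
by have := Hv1 v vT vr; lia.
Qed.

Unset Implicit Arguments.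

Theorem theorem1p2 (V : finType) (e : rel V) :
  irreflexive e -> 0 < #|V| -> (forall v : V, 2 <= outdeg e v) ->
  has_subdiv_K3_minus_e e.
Proof.
move=> Hirr /card_gt0P [r _] Hdeg.
have Hout : forall v, outd e [set: V] v = outdeg e v.
  by move=> v; rewrite /outd /outdeg; apply: eq_card => w; rewrite !inE.
apply: (sub_in_has (T:=[set: V])).
apply: (main (n:=#|[set: V]|) (r:=r) (leqnn _)); split.
- exact: Hirr.
- by rewrite in_setT.
- by rewrite Hout; apply: leq_trans (Hdeg r).
- by move=> v _ _; rewrite Hout.
Qed.
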